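(* Let $\mathrm{V}=\{1,\dots,n\}$ with $n=r_1r_2\cdots r_k$ for integers $k\ge2$ and $r_1,\dots,r_k\ge2$. Then there exist a graph $\mathrm{G}$ on $\mathrm{V}$, a clique coverage of $\mathrm{G}$ whose cliques have sizes in $\{r_1,\dots,r_k\}$, and a sequence of $\sum_{i=1}^k\prod_{j\ne i}r_j$ cliques from it, along which the clique-gossip averaging algorithm satisfies $\mathbf{x}(T)=\big(\frac1n\sum_j\mathbf{x}_j(0)\big)\mathbf{1}$ with $T=\sum_{i=1}^k\prod_{j\ne i}r_j$, for every initial value $\mathbf{x}(0)\in\mathbb{R}^n$.
   Context: A clique of a simple undirected graph $\mathrm{G}$ on $\mathrm{V}$ is a vertex subset inducing a complete subgraph; a clique coverage is a finite set of cliques whose union is $\mathrm{V}$ and whose union of induced subgraphs is connected. The clique-gossip averaging algorithm along a sequence of cliques $\mathrm{Q}_0,\mathrm{Q}_1,\dots$ acts on $\mathbf{x}(t)\in\mathbb{R}^n$ by $\mathbf{x}_i(t+1)=\frac{1}{|\mathrm{Q}_t|}\sum_{j\in\mathrm{Q}_t}\mathbf{x}_j(t)$ if $i\in\mathrm{Q}_t$ and $\mathbf{x}_i(t+1)=\mathbf{x}_i(t)$ otherwise. $\mathbf{1}$ is the all-ones vector. *)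

(* Defs.v *)
From HB Require Import structures.
From mathcomp Require Import all_boot all_order all_algebra.
Set Implicit Arguments. Unset Strict Implicit. Unset Printing Implicit Defensive.
Import Order.TTheory GRing.Theory Num.Theory.

Definition simple_graph (T : finType) (e : rel T) : Prop :=
  (forall x y, e x y = e y x) /\ (forall x, ~~ e x x).

Definition is_clique (T : finType) (e : rel T) (Q : {set T}) : Prop :=
  forall x y, x \in Q -> y \in Q -> x != y -> e x y.

Definition cover_rel (T : finType) (C : {set {set T}}) : rel T :=
  fun x y => (x != y) && [exists Q in C, (x \in Q) && (y \in Q)].

Definition clique_coverage (T : finType) (e : rel T) (C : {set {set T}}) : Prop :=
  (forall Q, Q \in C -> is_clique e Q) /\
  (\bigcup_(Q in C) Q = [set: T]) /\
  (forall x y, connect (cover_rel C) x y).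

Local Open Scope ring_scope.

Definition gossip_step (R : fieldType) (n : nat) (Q : {set 'I_n})
    (x : 'I_n -> R) : 'I_n -> R :=
  fun i => if i \in Q then (#|Q|%:R)^-1 * \sum_(j in Q) x j else x i.

Definition gossip_run (R : fieldType) (n : nat) (s : seq {set 'I_n})
    (x0 : 'I_n -> R) : 'I_n -> R :=
  foldl (fun x Q => gossip_step Q x) x0 s.

(* Main.v *)
Require Import Defs.
From HB Require Import structures.
From mathcomp Require Import all_boot all_order all_algebra.
Import Order.TTheory GRing.Theory Num.Theory.
From mathcomp Require Import zify ring lra.
Set Implicit Arguments. Unset Strict Implicit.

Lemma decomp d r w : (w = (w %/ (d*r)) * (d*r) + ((w %/ d) %% r) * d + w %% d)%N.
Proof.
rewrite divnMA.
have h1 := divn_eq w d. have h2 := divn_eq (w %/ d) r.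
rewrite {1}h1 {1}h2. ring.
Qed.

Lemma pt_props d r b t a : (0 < d)%N -> (t < r)%N -> (a < d)%N ->
  [/\ (b*(d*r) + t*d + a) %% d = a, (b*(d*r) + t*d + a) %/ d = b*r + t,
     ((b*(d*r) + t*d + a) %/ d) %% r = t & (b*(d*r) + t*d + a) %/ (d*r) = b]%N.
Proof.
move=> d0 tr ad. set kk := (b*(d*r) + t*d + a)%N.
have e : kk = ((b*r + t)*d + a)%N by rewrite /kk; ring.
have r0 : (0 < r)%N by lia.
have d1 : (kk %/ d = b*r + t)%N by rewrite e divnMDl // divn_small // addn0.
split => //.
- by rewrite e modnMDl modn_small.
- by rewrite d1 modnMDl modn_small.
- by rewrite divnMA d1 divnMDl // divn_small // addn0.
Qed.

Lemma uniq_dm d w w' : (w %% d = w' %% d -> w %/ d = w' %/ d -> w = w')%N.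
Proof. by move=> h1 h2; rewrite (divn_eq w d) (divn_eq w' d) h1 h2. Qed.

Lemma pt_bound d r P n b t a : (t < r)%N -> (a < d)%N -> (b < P)%N -> n = (d*r*P)%N ->
  (b*(d*r) + t*d + a < n)%N.
Proof.
move=> tr ad bP ->.
have h1 : (t*d + a < d*r)%N.
  have : (t.+1 * d <= r * d)%N by rewrite leq_mul2r tr orbT.
  rewrite mulSn mulnC. lia.
have h2 : (b.+1 * (d*r) <= d*r*P)%N by rewrite [X in (_ <= X)%N]mulnC leq_mul2r bP orbT.
rewrite mulSn in h2. lia.
Qed.

Lemma card_gen n d r P a b : (0 < d)%N -> (0 < r)%N -> (a < d)%N -> (b < P)%N -> n = (d*r*P)%N ->
  #|[set w : 'I_n | (w %% d == a) && (w %/ (d*r) == b)]| = r.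
Proof.
move=> d0 r0 ad bP hn.
have n0 : (0 < n)%N by rewrite hn !muln_gt0 d0 r0; lia.
pose w0 : 'I_n := Ordinal n0.
pose f := fun t : 'I_r => insubd w0 (b*(d*r) + t*d + a)%N.
have fv : forall t : 'I_r, val (f t) = (b*(d*r) + t*d + a)%N.
  by move=> t; rewrite val_insubd (pt_bound (ltn_ord t) ad bP hn).
have -> : [set w : 'I_n | (w %% d == a) && (w %/ (d*r) == b)] = f @: [set: 'I_r].
  apply/setP => w; rewrite inE; apply/andP/imsetP.
    case=> /eqP ha /eqP hb; exists (Ordinal (ltn_pmod (w %/ d) r0)); first by rewrite inE.
    by apply: val_inj; rewrite fv /= {1}(decomp d r w) ha hb.
  case=> t _ ->; rewrite fv.
  have [h1 _ _ h4] := pt_props b d0 (ltn_ord t) ad.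
  by rewrite h1 h4.
rewrite card_imset ?cardsT ?card_ord //.
move=> t1 t2 /(congr1 val); rewrite !fv => e; apply: ord_inj.
have [_ _ h3 _] := pt_props b d0 (ltn_ord t1) ad.
have [_ _ h3' _] := pt_props b d0 (ltn_ord t2) ad.
by rewrite -h3 -h3' e.
Qed.


Definition Mp (rr : nat -> nat) (i : nat) : nat := \prod_(j < i) rr j.
Definition Pp (rr : nat -> nat) (k i : nat) : nat := \prod_(i.+1 <= j < k) rr j.
Definition line n rr i a b : {set 'I_n} :=
  [set w : 'I_n | (w %% Mp rr i == a) && (w %/ (Mp rr i * rr i) == b)].
Definition stage n rr k i : seq {set 'I_n} :=
  [seq line n rr i a b | a <- iota 0 (Mp rr i), b <- iota 0 (Pp rr k i)].
Definition prefix n rr k j : seq {set 'I_n} :=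
  flatten [seq stage n rr k i | i <- iota 0 j].

Lemma Mp_gt0 rr i : (forall j, 0 < rr j) -> 0 < Mp rr i.
Proof. by move=> h; apply: prodn_gt0. Qed.

Lemma MpS rr i : Mp rr i.+1 = Mp rr i * rr i.
Proof. by rewrite /Mp big_ord_recr. Qed.

Lemma Mp0 rr : Mp rr 0 = 1.
Proof. by rewrite /Mp big_ord0. Qed.

Lemma Mp_split rr k i : i < k -> Mp rr k = Mp rr i * rr i * Pp rr k i.
Proof.
move=> ik; rewrite -MpS /Mp /Pp -!(big_mkord xpredT).
by rewrite (@big_cat_nat _ _ _ i.+1).
Qed.

Lemma prefixS n rr k j : prefix n rr k j.+1 = prefix n rr k j ++ stage n rr k j.
Proof. by rewrite /prefix -addn1 iotaD map_cat flatten_cat /= cats0. Qed.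

Lemma size_prefix n rr k j : size (prefix n rr k j) = \sum_(i < j) Mp rr i * Pp rr k i.
Proof.
elim: j => [|j IH]; first by rewrite big_ord0.
by rewrite prefixS size_cat IH big_ord_recr /= /stage size_allpairs !size_iota.
Qed.

Lemma stage_mem n rr k i Q : Q \in stage n rr k i ->
  exists a b, [/\ a < Mp rr i, b < Pp rr k i & Q = line n rr i a b].
Proof.
case/allpairsP => [[a b] /= [ha hb ->]]; exists a, b.
by move: ha hb; rewrite !mem_iota /= !add0n => -> ->.
Qed.

Lemma line_in_stage n rr k i a b : a < Mp rr i -> b < Pp rr k i ->
  line n rr i a b \in stage n rr k i.
Proof. by move=> ha hb; apply: allpairs_f; rewrite mem_iota. Qed.

Lemma prefix_mem n rr k j Q : Q \in prefix n rr k j <-> exists2 i, i < j & Q \in stage n rr k i.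
Proof.
split.
  case/flattenP => s /mapP [i]; rewrite mem_iota /= add0n => hi -> hQ; by exists i.
case=> i hi hQ; apply/flattenP; exists (stage n rr k i) => //.
by apply: map_f; rewrite mem_iota.
Qed.

Lemma v_in_line n rr (v : 'I_n) i : v \in line n rr i (v %% Mp rr i) (v %/ (Mp rr i * rr i)).
Proof. by rewrite inE !eqxx. Qed.

Lemma v_bounds n rr k i (v : 'I_n) : (forall j, 0 < rr j) -> n = Mp rr k -> i < k ->
  v %% Mp rr i < Mp rr i /\ v %/ (Mp rr i * rr i) < Pp rr k i.
Proof.
move=> hrr hn ik; split; first by rewrite ltn_pmod ?Mp_gt0.
rewrite ltn_divLR; last by rewrite muln_gt0 Mp_gt0 ?hrr.
by rewrite (mulnC (Pp rr k i)) -Mp_split // -hn ltn_ord.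
Qed.

Lemma connect_prefix n rr k (C : {set {set 'I_n}}) :
  (forall j, (0 < rr j)%N) -> n = Mp rr k ->
  (forall Q, Q \in prefix n rr k k -> Q \in C) ->
  forall j, (j <= k)%N -> forall x y : 'I_n, x %/ Mp rr j = y %/ Mp rr j ->
  connect (cover_rel C) x y.
Proof.
move=> hrr hn hC; elim=> [|j IH] hj x y.
  rewrite Mp0 !divn1 => /val_inj ->; exact: connect0.
have jk : (j < k)%N by [].
have [ha hb] := v_bounds y hrr hn jk.
set d := Mp rr j in ha hb *; set r := rr j in hb *.
have d0 : (0 < d)%N by apply: Mp_gt0.
have r0 : (0 < r)%N by apply: hrr.
have hnP : n = (d * r * Pp rr k j)%N by rewrite hn (Mp_split _ jk).
rewrite MpS -/d -/r => hxy.
set a := y %% d in ha *; set b := y %/ (d*r) in hb *.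
have tr : (x %/ d %% r < r)%N by rewrite ltn_pmod.
pose z : 'I_n := insubd x (b*(d*r) + (x %/ d %% r)*d + a).
have zv : val z = (b*(d*r) + (x %/ d %% r)*d + a)%N.
  by rewrite val_insubd (pt_bound tr ha hb hnP).
have zv' : nat_of_ord z = (b*(d*r) + (x %/ d %% r)*d + a)%N := zv.
have [h1 h2 _ h4] := pt_props b d0 tr ha.
have xz : connect (cover_rel C) x z.
  apply: IH; first exact: ltnW.
  by rewrite zv' h2 {1}(divn_eq (x %/ d) r) -divnMA hxy.
have hL : line n rr j a b \in C.
  apply: hC; apply/prefix_mem; exists j => //; exact: line_in_stage.
have zL : z \in line n rr j a b by rewrite inE -/d -/r zv' h1 h4 !eqxx.
have yL : y \in line n rr j a b by apply: v_in_line.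
apply: (connect_trans xz).
have [->|ne] := eqVneq z y; first exact: connect0.
apply: connect1; rewrite /cover_rel ne /=; apply/existsP; exists (line n rr j a b).
by rewrite hL zL yL.
Qed.

Lemma prod_except (rr : nat -> nat) k i : (i < k)%N ->
  (\prod_(j < k | (j : nat) != i) rr j = Mp rr i * Pp rr k i)%N.
Proof.
move=> ik.
rewrite -(big_mkord (fun j => j != i) rr) (@big_cat_nat _ _ _ i 0 k _ _ (leq0n i) (ltnW ik)).
rewrite (@big_ltn_cond _ _ _ i k) // eqxx /= /Mp /Pp -(big_mkord xpredT).
congr (_ * _).
  rewrite big_nat_cond [RHS]big_nat_cond; apply: eq_bigl => j.
  apply/idP/idP => /andP [h1 h2]; apply/andP; split => //; lia.
rewrite big_nat_cond [RHS]big_nat_cond; apply: eq_bigl => j.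
apply/idP/idP => /andP [h1 h2]; apply/andP; split => //; lia.
Qed.

Local Open Scope ring_scope.

Lemma stage_run (R : numFieldType) n (L : seq {set 'I_n}) (x y : 'I_n -> R) :
  (forall Q Q', Q \in L -> Q' \in L -> Q = Q' \/ (forall w, w \in Q -> w \notin Q')) ->
  (forall Q, Q \in L -> forall v, v \in Q -> y v = (#|Q|%:R)^-1 * \sum_(j in Q) x j) ->
  (forall v, (forall Q, Q \in L -> v \notin Q) -> y v = x v) ->
  forall v, gossip_run L x v = y v.
Proof.
elim: L x => [|Q L IH] x hd hQ hn v.
  by rewrite /gossip_run /= hn.
change (gossip_run L (gossip_step Q x) v = y v).
apply: IH.
- by move=> Q1 Q2 h1 h2; apply: hd; rewrite inE ?h1 ?h2 orbT.
- move=> Q1 h1 w wQ1. rewrite (hQ Q1 _ w wQ1); last by rewrite inE h1 orbT.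
  have h1' : Q1 \in Q :: L by rewrite inE h1 orbT.
  have [eQ|dis] := hd Q Q1 (mem_head _ _) h1'.
  + subst Q1; rewrite [in RHS](eq_bigr (fun _ => (#|Q|%:R)^-1 * \sum_(j in Q) x j)); last first.
      by move=> i iQ; rewrite /gossip_step /= iQ.
    have hk : (#|Q|%:R : R) != 0.
      rewrite pnatr_eq0 -lt0n; apply/card_gt0P; by exists w.
    rewrite sumr_const.
    set c := (#|Q|%:R^-1 * \sum_(j in Q) x j).
    by rewrite -(mulr_natr c) mulrC mulfK.
  + congr (_ * _); apply: eq_bigr => j jQ1.
    rewrite /gossip_step; case: ifP => // jQ.
    by move: (dis j jQ); rewrite jQ1.
- move=> u hu. rewrite /gossip_step; case: ifP => uQ.
    by rewrite (hQ Q (mem_head _ _) u uQ).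
  apply: hn => Q1; rewrite inE; case/orP => [/eqP ->|]; first by rewrite uQ.
  exact: hu.
Qed.

Lemma sum_gen (R : numFieldType) n d r P (x0 : 'I_n -> R) (v : 'I_n) :
  (0 < d)%N -> (0 < r)%N -> n = (d*r*P)%N ->
  \sum_(w in [set w : 'I_n | (modn w d == modn v d) && (divn w (d*r)%N == divn v (d*r)%N)])
     \sum_(u : 'I_n | divn u d == divn w d) x0 u
  = \sum_(u : 'I_n | divn u (d*r)%N == divn v (d*r)%N) x0 u.
Proof.
move=> d0 r0 hn.
set a := modn v d; set b := divn v (d*r)%N.
have ad : (a < d)%N by rewrite ltn_pmod.
have bP : (b < P)%N by rewrite ltn_divLR ?muln_gt0 ?d0 ?r0 // mulnC -hn ltn_ord.
rewrite (exchange_big_dep xpredT) //=.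
rewrite [RHS]big_mkcond; apply: eq_bigr => u _.
case: eqP => hu.
- have tr : (modn (divn u d) r < r)%N by rewrite ltn_pmod.
  pose w0 : 'I_n := insubd v (b*(d*r) + (modn (divn u d) r)*d + a)%N.
  have w0v : val w0 = (b*(d*r) + (modn (divn u d) r)*d + a)%N.
    by rewrite val_insubd (pt_bound tr ad bP hn).
  rewrite (big_pred1 w0) // => w; rewrite inE /=.
  apply/idP/idP.
    case/andP => /andP[/eqP ha /eqP hb] /eqP hd.
    by apply/eqP/val_inj; rewrite w0v /= {1}(decomp d r w) ha hb -hd.
  move/eqP ->; rewrite w0v.
  have [h1 h2 _ h4] := pt_props b d0 tr ad.
  rewrite h1 h4 h2 !eqxx /=.
  by rewrite {1}(divn_eq (divn u d) r) -divnMA hu.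
- rewrite big_pred0 // => w; apply/negbTE; apply/negP.
  rewrite inE => /andP[/andP[_ /eqP hb] /eqP hd]; apply: hu.
  by rewrite divnMA hd -divnMA hb.
Qed.

Lemma run_prefix (R : numFieldType) rr k n (x0 : 'I_n -> R) :
  (forall j, (0 < rr j)%N) -> n = Mp rr k ->
  forall j, (j <= k)%N -> forall v,
  gossip_run (prefix n rr k j) x0 v =
    (Mp rr j)%:R^-1 * \sum_(u : 'I_n | divn u (Mp rr j) == divn v (Mp rr j)) x0 u.
Proof.
move=> hrr hn; elim=> [|j IH] hj v.
  rewrite Mp0 invr1 mul1r /prefix /=.
  rewrite (eq_bigl (fun u => u == v)) ?big_pred1_eq // => u.
  by rewrite !divn1.
have jk : (j < k)%N by [].
set d := Mp rr j; set r := rr j.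
have d0 : (0 < d)%N by apply: Mp_gt0.
have r0 : (0 < r)%N by apply: hrr.
have hnP : n = (d * r * Pp rr k j)%N by rewrite hn (Mp_split _ jk).
rewrite prefixS /gossip_run foldl_cat -/(gossip_run _ _) -/(gossip_run _ _).
rewrite MpS -/d -/r.
move: v; apply: (@stage_run R n _ (gossip_run (prefix n rr k j) x0)
   (fun v : 'I_n => (d * r)%:R^-1 * \sum_(u : 'I_n | divn u (d*r)%N == divn v (d*r)%N) x0 u)).
- move=> Q Q' /stage_mem [a [b [ha hb ->]]] /stage_mem [a' [b' [ha' hb' ->]]].
  have [/andP [/eqP <- /eqP <-]|ne] := boolP ((a == a') && (b == b')); first by left.
  right => w; rewrite !inE -/d -/r => /andP [/eqP wa /eqP wb].
  apply/negP => /andP [/eqP wa' /eqP wb']; move: ne.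
  by rewrite -wa -wb -wa' -wb' !eqxx.
- move=> Q /stage_mem [a [b [ha hb ->]]] u uQ.
  have := uQ; rewrite inE -/d -/r => /andP [/eqP ea /eqP eb].
  rewrite (card_gen d0 r0 ha hb hnP).
  rewrite [in RHS](eq_bigr (fun w : 'I_n => d%:R^-1 * \sum_(u0 : 'I_n | divn u0 d == divn w d) x0 u0)); last first.
    by move=> w _; rewrite (IH (ltnW jk)).
  rewrite -mulr_sumr.
  have -> : line n rr j a b = [set w : 'I_n | (modn w d == modn u d) && (divn w (d*r)%N == divn u (d*r)%N)].
    by apply/setP => w; rewrite !inE -/d -/r ea eb.
  rewrite (sum_gen _ _ d0 r0 hnP) natrM invfM.
  by rewrite mulrA [r%:R^-1 * _]mulrC.
- move=> u hu; exfalso.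
  have [h1 h2] := v_bounds u hrr hn jk.
  by move: (hu _ (line_in_stage n h1 h2)); rewrite v_in_line.
Qed.

Theorem mainTheorem8 (R : realFieldType) (k : nat) (r : 'I_k -> nat) (n : nat)
  (hk : (2 <= k)%N) (hr : forall i, (2 <= r i)%N)
  (hn : n = (\prod_(i < k) r i)%N) :
  let T := (\sum_(i < k) \prod_(j < k | j != i) r j)%N in
  exists (e : rel 'I_n) (C : {set {set 'I_n}}) (s : seq {set 'I_n}),
    simple_graph e /\
    clique_coverage e C /\
    (forall Q, Q \in C -> exists i : 'I_k, #|Q| = r i) /\
    size s = T /\
    (forall Q, Q \in s -> Q \in C) /\
    (forall x0 : 'I_n -> R, forall i : 'I_n,
           gossip_run s x0 i = (n%:R)^-1 * \sum_(j < n) x0 j).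
Proof.
case: k r hk hr hn => [//|k'] r hk hr hn T.
pose rr := fun j : nat => r (inord j).
have hrr : forall j, (0 < rr j)%N by move=> j; apply: leq_trans (hr _).
have hn' : n = Mp rr k'.+1.
  by rewrite hn /Mp; apply: eq_bigr => i _; rewrite /rr inord_val.
pose s := prefix n rr k'.+1 k'.+1.
pose C := [set Q in s].
have sC : forall Q, Q \in s -> Q \in C by move=> Q; rewrite inE.
exists (cover_rel C), C, s.
split.
  split => [x y|x]; rewrite /cover_rel; last by rewrite eqxx.
  rewrite eq_sym; congr andb; apply: eq_existsb => Q; by rewrite [(y \in Q) && _]andbC.
split.
  split; [|split].
  - move=> Q QC x y xQ yQ xy; rewrite /cover_rel xy /=; apply/existsP; exists Q.
    by rewrite QC xQ yQ.
  - apply/setP => v; rewrite inE; apply/bigcupP.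
    have [h1 h2] := v_bounds v hrr hn' (ltn0Sn k').
    exists (line n rr 0 (v %% Mp rr 0)%N (v %/ (Mp rr 0 * rr 0))%N); last exact: v_in_line.
    by apply: sC; apply/prefix_mem; exists 0%N => //; exact: line_in_stage.
  - move=> x y; apply: (connect_prefix hrr hn' sC (leqnn _)).
    by rewrite -hn' !divn_small.
split.
  move=> Q; rewrite inE => /prefix_mem [i ik /stage_mem [a [b [ha hb ->]]]].
  exists (inord i).
  have hP : n = (Mp rr i * rr i * Pp rr k'.+1 i)%N by rewrite hn' (Mp_split _ ik).
  exact: (card_gen (Mp_gt0 i hrr) (hrr i) ha hb hP).
split.
  rewrite size_prefix /T; apply: eq_bigr => i _.
  rewrite -(prod_except rr (ltn_ord i)).
  apply: eq_big => [j|j _]; first by [].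
  by rewrite /rr inord_val.
split; first by [].
move=> x0 v; rewrite (run_prefix x0 hrr hn' (leqnn _)) -hn'.
congr (_ * _); apply: eq_bigl => u.
by rewrite !divn_small ?eqxx.
Qed.
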